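(* Let $\Omega\subseteq\mathbb{R}^N$ be open and bounded, and let $\rho$, $\Delta$, $\Theta=\partial\Omega\cup\Delta$, $\eta$, $T$ and $T_n$ be as described in the context. If $f\in C(\overline{\Omega})$, then $Tf$ extends to a function in $C(\overline{\Omega})$ which coincides with $f$ on $\partial\Omega\cup\Delta$, and $T_nf\to f$ uniformly as $n\to\infty$. Further, if $f\in C(\Omega)$ and $\Gamma\subseteq\partial\Omega$ is a closed set such that $\mathrm{supp}(f)\cap\Gamma=\emptyset$, then also $\mathrm{supp}(Tf)\cap\Gamma=\emptyset$.
   Context: $\rho\in C_c^\infty(\mathbb{R}^N)$ satisfies $0\le\rho\le1$, $\rho(x)=0$ iff $|x|\ge1$, $\rho$ is radially symmetric, and $\rho(x)\ge\rho(1/2)$ for all $|x|<1/2$ (where $\rho(1/2)$ denotes the common value of $\rho$ on the sphere $|x|=1/2$). Set $M_\rho:=(\int_{B_1(0)}\rho(y)\,dy)^{-1}$. Let $\Delta\subseteq\overline{\Omega}$ (possibly empty) be such that $\Theta:=\partial\Omega\cup\Delta$ is closed, and let $\eta\in C^\infty(\mathbb{R}^N)$ be non-negative with $\eta^{-1}(\{0\})=\Theta$, all derivatives of $\eta$ vanishing on $\Theta$, and $\eta(x)<\mathrm{dist}(x,\Theta)$ for every $x\in\mathbb{R}^N\setminus\Theta$. For $f\in L^1_{loc}(\Omega)$, $x\in\Omega$ and $n\in\mathbb{N}$ define $Tf(x):=M_\rho\int_{B_1(0)}\rho(z)f(x-\eta(x)z)\,dz$ and $T_nf(x):=M_\rho\int_{B_1(0)}\rho(z)f(x-\tfrac{\eta(x)}{n}z)\,dz$.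 Thus $Tf(x)=f(x)$ if $\eta(x)=0$, and $Tf(x)=\frac{M_\rho}{\eta(x)^N}\int_\Omega\rho\big(\frac{x-y}{\eta(x)}\big)f(y)\,dy$ if $\eta(x)>0$. For $f:\Omega\to\mathbb{R}$, $\mathrm{supp}(f)$ denotes the closure of $\{x\in\Omega:f(x)\neq0\}$. *)

(* Defs.v *)
From HB Require Import structures.
From mathcomp Require Import all_boot all_order all_algebra.
From mathcomp Require Import all_classical all_reals all_analysis.
Set Implicit Arguments. Unset Strict Implicit. Unset Printing Implicit Defensive.
Import Order.TTheory GRing.Theory Num.Theory.
Import numFieldNormedType.Exports.
Local Open Scope classical_set_scope.
Local Open Scope ring_scope.

(* R^N is represented by row vectors 'rV[R]_N (its topology is the usual one). *)

Definition enorm (R : realType) (N : nat) (x : 'rV[R]_N) : R :=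
  Num.sqrt (\sum_(i < N) x 0 i ^+ 2).

Definition bdry (R : realType) (N : nat) (A : set 'rV[R]_N) : set 'rV[R]_N :=
  closure A `\` interior A.

(* Euclidean distance from a point to a set, in the extended reals
   (= +oo for the empty set). *)
Definition distE (R : realType) (N : nat) (x : 'rV[R]_N) (A : set 'rV[R]_N)
  : \bar R := ereal_inf [set (enorm (x - y))%:E | y in A].

Definition evec (R : realType) (N : nat) (i : 'I_N) : 'rV[R]_N := delta_mx 0 i.

Fixpoint ipartial (R : realType) (N : nat) (l : seq 'I_N) (f : 'rV[R]_N -> R)
  : 'rV[R]_N -> R :=
  match l with
  | [::] => f
  | i :: l' => fun x => derive (ipartial l' f) x (evec R i)
  end.

Definition smooth (R : realType) (N : nat) (f : 'rV[R]_N -> R) : Prop :=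
  forall l : seq 'I_N,
    continuous (ipartial l f) /\
    forall (i : 'I_N) (x : 'rV[R]_N), derivable (ipartial l f) x (evec R i).

(* Integral over R^N (w.r.t. Lebesgue measure), written as the iterated
   one-dimensional Lebesgue integral; it coincides with the N-dimensional
   Lebesgue integral for the (continuous, compactly supported) integrands
   used below (Fubini). *)
Fixpoint intRN (R : realType) (N : nat) : ('rV[R]_N -> R) -> R :=
  match N return ('rV[R]_N -> R) -> R with
  | 0 => fun g => g 0
  | N'.+1 => fun g =>
      Rintegral (@lebesgue_measure R) setT
        (fun t : R => @intRN R N' (fun v : 'rV[R]_N' =>
                          g (row_mx (const_mx t : 'rV[R]_1) v)))
  end.

Definition Mrho (R : realType) (N : nat) (rho : 'rV[R]_N -> R) : R :=
  (intRN (fun y => if enorm y < 1 then rho y else 0))^-1.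

Definition Top (R : realType) (N : nat) (rho eta : 'rV[R]_N -> R)
  (f : 'rV[R]_N -> R) (x : 'rV[R]_N) : R :=
  Mrho rho * intRN (fun z => if enorm z < 1 then rho z * f (x - eta x *: z) else 0).

Definition Topn (R : realType) (N : nat) (rho eta : 'rV[R]_N -> R) (n : nat)
  (f : 'rV[R]_N -> R) (x : 'rV[R]_N) : R :=
  Mrho rho *
  intRN (fun z => if enorm z < 1 then rho z * f (x - (eta x / n%:R) *: z) else 0).

Definition supp (R : realType) (N : nat) (Omega : set 'rV[R]_N)
  (f : 'rV[R]_N -> R) : set 'rV[R]_N :=
  closure [set x | Omega x /\ f x <> 0].

(* Main.v *)
Require Import Defs.
From HB Require Import structures.
From mathcomp Require Import all_boot all_order all_algebra.
From mathcomp Require Import all_classical all_reals all_analysis.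
From mathcomp Require Import ring lra.
Set Implicit Arguments. Unset Strict Implicit. Unset Printing Implicit Defensive.
Import Order.TTheory GRing.Theory Num.Theory.
Import numFieldNormedType.Exports.
Local Open Scope classical_set_scope.
Local Open Scope ring_scope.

Section S.
Variables (R : realType) (N : nat).
Notation V := 'rV[R]_N.

Lemma within_ed (f : V -> R) K x : {within K, continuous f} -> K x ->
  forall e, 0 < e -> exists2 d, 0 < d & forall y, K y -> `|x - y| < d -> `|f x - f y| < e.
Proof.
move=> /subspace_continuousP cf Kx e e0.
have : \forall y \near x, K y -> `|f x - f y| < e.
  exact: (cvgrPdist_lt _ _).1 (cf x Kx) e e0.
move=> /nbhs_ballP[d d0 H].
exists d => // y Ky xy; apply: H => //.
by rewrite -ball_normE.
Qed.

Lemma heine_cantor (f : V -> R) K : compact K -> {within K, continuous f} ->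
  forall e : R, 0 < e -> exists2 d : R, 0 < d &
    forall x y, K x -> K y -> `|x - y| < d -> `|f x - f y| < e.
Proof.
move=> cK cf e e0.
have e20 : 0 < e / 2 by rewrite divr_gt0.
have A : \forall d \near 0^'+, K `<=` (fun x => forall y, K y -> `|x - y| < d -> `|f x - f y| < e).
  apply: ((near_covering_withinP K).2 ((compact_near_coveringP K).1 cK) R (0^'+)
    (fun d x => forall y, K y -> `|x - y| < d -> `|f x - f y| < e)) => x Kx.
  have [r r0 Hr] := within_ed cf Kx e20.
  have r20 : 0 < r / 2 by rewrite divr_gt0.
  exists (ball x (r / 2), [set d | 0 < d < r / 2]); [split => /= |].
  + exact: nbhsx_ballx.
  + near=> d; apply/andP; split; near: d; [exact: nbhs_right_gt | exact: nbhs_right_lt].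
  + move=> [x' d] [/= bx /andP[d0 dr]] Kx' y Ky x'y.
    rewrite -ball_normE /= in bx.
    have xy : `|x - y| < r.
      rewrite (_ : x - y = (x - x') + (x' - y)); last by rewrite addrA subrK.
      apply: le_lt_trans (ler_normD _ _) _.
      by rewrite (splitr r) ltrD // (lt_trans x'y dr).
    have r2 : r / 2 < r by lra.
    have := Hr _ Kx' (lt_trans bx r2); have := Hr _ Ky xy => h1 h2.
    have -> : f x' - f y = (f x - f y) - (f x - f x') by ring.
    apply: le_lt_trans (ler_normB _ _) _.
    by rewrite (splitr e) ltrD.
  have : \forall d \near 0^'+, 0 < d /\ K `<=` (fun x => forall y, K y -> `|x - y| < d -> `|f x - f y| < e).
    near=> d; split; [near: d; exact: nbhs_right_gt | near: d; exact: A].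
  move=> /filter_ex [d [d0 Hd]]; exists d => // x y Kx Ky; exact: Hd.
Unshelve. all: by end_near.
Qed.
End S.
Section E.
Variables (R : realType) (N : nat).
Notation V := 'rV[R]_N.

Lemma normV_le (z : V) c : 0 <= c -> (forall i, `|z 0 i| <= c) -> `|z| <= c.
Proof.
move=> c0 H; change (mx_norm z <= c); rewrite mx_normrE.
apply/bigmax_leP; split => // -[i j] _ /=.
by rewrite (ord1 i); exact: H.
Qed.

Lemma coord_le_normV (z : V) i : `|z 0 i| <= `|z|.
Proof.
change (`|z 0 i| <= mx_norm z); rewrite mx_normrE.
exact: (le_bigmax _ (fun ij : 'I_1 * 'I_N => `|z ij.1 ij.2|) (0, i)).
Qed.

Lemma normV_ge0' (z : V) : 0 <= `|z|. Proof. exact: normr_ge0. Qed.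

Lemma enorm_ge0 (z : V) : 0 <= enorm z.
Proof. exact: sqrtr_ge0. Qed.

Lemma coord_le_enorm (z : V) i : `|z 0 i| <= enorm z.
Proof.
rewrite /enorm -sqrtr_sqr ler_wsqrtr // (bigD1 i) //= lerDl.
by apply: sumr_ge0 => j _; exact: sqr_ge0.
Qed.

Lemma normV_le_enorm (z : V) : `|z| <= enorm z.
Proof. apply: normV_le; [exact: enorm_ge0 | exact: coord_le_enorm]. Qed.

Lemma enorm_le_normV (z : V) : enorm z <= N%:R * `|z|.
Proof.
rewrite /enorm -(ger0_norm (mulr_ge0 (ler0n _ N) (normr_ge0 z))) -sqrtr_sqr.
apply: ler_wsqrtr; apply: (@le_trans _ _ (\sum_(i < N) `|z| ^+ 2)).
  apply: ler_sum => i _; rewrite -real_normK ?num_real //.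
  by rewrite lerXn2r // ?nnegrE //; exact: coord_le_normV.
rewrite sumr_const card_ord exprMn -[X in X <= _]mulr_natl.
have HN : (N%:R : R) <= N%:R ^+ 2.
  by rewrite -natrX ler_nat; case: (N) => // n; rewrite expnS leq_pmulr.
by apply: ler_wpM2r => //; exact: sqr_ge0.
Qed.

Lemma enormZ c (z : V) : enorm (c *: z) = `|c| * enorm z.
Proof.
rewrite /enorm -sqrtr_sqr -sqrtrM ?sqr_ge0 // mulr_sumr; congr Num.sqrt.
by apply: eq_bigr => i _; rewrite mxE exprMn.
Qed.

Lemma enorm0 : enorm (0 : V) = 0.
Proof. by rewrite -(scale0r (0 : V)) enormZ normr0 mul0r. Qed.

Lemma cont_sum (T : topologicalType) (I : Type) (s : seq I) (g : I -> T -> R) :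
  (forall i, continuous (g i)) -> continuous (fun z => \sum_(i <- s) g i z).
Proof.
move=> H; elim: s => [|a s IH].
  under eq_fun do rewrite big_nil; exact: cst_continuous.
under eq_fun do rewrite big_cons.
by move=> x; apply: continuousD; [exact: H | exact: IH].
Qed.

Lemma enorm_continuous : continuous (@enorm R N).
Proof.
move=> x; apply: continuous_comp; last exact: sqrt_continuous.
apply: cont_sum => i y; rewrite /=.
apply: (@continuousM _ _ (fun z : V => z 0 i) (fun z : V => z 0 i)); exact: coord_continuous.
Qed.
End E.
Section One.
Variable R : realType.
Local Notation mu := (@lebesgue_measure R).
Definition supp1D (F : R -> R) := forall t, 1 < `|t| -> F t = 0.

Lemma I1_out (t : R) : ~ (`[-1, 1]%classic t) -> 1 < `|t|.
Proof.
move=> H; rewrite ltNge; apply/negP => Ht; apply: H.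
by rewrite /= in_itv /= -ler_norml.
Qed.

Lemma patch_I1 (F : R -> R) : supp1D F -> (EFin \o F) \_ `[-1, 1]%classic = EFin \o F.
Proof.
move=> sF; apply/funext => t; rewrite patchE; case: ifPn => // /negP tI.
by rewrite /= sF //; apply: I1_out => It; apply: tI; rewrite inE.
Qed.

Lemma int1_integrable (F : R -> R) : continuous F -> supp1D F -> mu.-integrable setT (EFin \o F).
Proof.
move=> cF sF.
have : mu.-integrable `[-1, 1]%classic (EFin \o F).
  apply: continuous_compact_integrable; first exact: segment_compact.
  exact: continuous_subspaceT.
rewrite integrable_mkcond ?patch_I1 //.
Qed.

Lemma patch_I1R (F : R -> R) : supp1D F -> F \_ `[-1, 1]%classic = F.
Proof.
move=> sF; apply/funext => t; rewrite patchE; case: ifPn => // /negP tI.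
by rewrite sF //; apply: I1_out => It; apply: tI; rewrite inE.
Qed.

Lemma mu_I1 : fine (mu `[-1, 1]%classic) = 2.
Proof.
rewrite lebesgue_measure_itv /= lte_fin.
have -> : (-1 < 1 :> R) by lra.
by rewrite -EFinD /=; lra.
Qed.

Lemma int1_bound (F : R -> R) (B : R) : continuous F -> supp1D F -> (forall t, `|F t| <= B) ->
  `|Rintegral mu setT F| <= 2 * B.
Proof.
move=> cF sF FB.
apply: le_trans (le_normr_Rintegral measurableT (int1_integrable cF sF)) _.
have sF' : supp1D (fun t => `|F t|) by move=> t /sF ->; rewrite normr0.
rewrite -(patch_I1R sF') -Rintegral_mkcond.
have cF' : continuous (fun t => `|F t|).
  by move=> t; apply: continuous_comp; [exact: cF | exact: norm_continuous].
apply: le_trans (_ : Rintegral mu `[-1, 1]%classic (fun _ => B) <= _).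
  apply: le_Rintegral => //.
  - apply: continuous_compact_integrable; first exact: segment_compact.
    exact: continuous_subspaceT.
  - apply: continuous_compact_integrable; first exact: segment_compact.
    by apply: continuous_subspaceT => ?; exact: cvg_cst.
by rewrite Rintegral_cst // mu_I1 mulrC.
Qed.

Lemma int1_ge0 F : (forall t, 0 <= F t) -> 0 <= Rintegral mu setT F.
Proof. by move=> H; apply: Rintegral_ge0. Qed.

Lemma int1_gt0 (F : R -> R) (t0 : R) : continuous F -> supp1D F -> (forall t, 0 <= F t) -> 0 < F t0 ->
  0 < Rintegral mu setT F.
Proof.
move=> cF sF F0 Ft0.
have e0 : 0 < F t0 / 2 by rewrite divr_gt0.
have : \forall t \near t0, `|F t0 - F t| < F t0 / 2.
  exact: (cvgrPdist_lt _ _).1 (cF t0) _ e0.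
move=> /nbhs_ballP[d /= d0 Hd].
have iF := int1_integrable cF sF.
have fin := integrable_fin_num measurableT iF.
rewrite /Rintegral -lte_fin (fineK fin).
set J := `[t0 - d / 2, t0 + d / 2]%classic.
have mJ : measurable J by exact: measurable_itv.
have [mF _] := integrableP _ _ _ iF.
apply: (@lt_le_trans _ _ (\int[mu]_(x in J) (F x)%:E)%E); last first.
  apply: ge0_subset_integral => //.
  by move=> t _; rewrite lee_fin.
apply: (@lt_le_trans _ _ (\int[mu]_(x in J) (cst (F t0 / 2)%:E) x)%E); last first.
  apply: ge0_le_integral => //.
  - by move=> t _; rewrite lee_fin ltW.
  - by apply: measurable_funS mF.
  move=> t; rewrite /J /= in_itv /= => /andP[h1 h2]; rewrite lee_fin.
  have : `|t0 - t| < d.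
    by rewrite ltr_norml; apply/andP; split; lra.
  rewrite -[X in X -> _]/(ball_ (fun x => `|x|) t0 d t) ball_normE => /Hd.
  rewrite ltr_norml => /andP[_ h3]; lra.
rewrite integral_cst //.
rewrite [X in (_ * X)%E](_ : _ = ((t0 + d / 2) - (t0 - d / 2))%:E); last first.
  have := lebesgue_measure_itv (`[t0 - d / 2, t0 + d / 2]); rewrite /= lte_fin.
  have -> : t0 - d / 2 < t0 + d / 2 by lra.
  by move=> ->; rewrite EFinB.
rewrite -EFinM lte_fin; apply: mulr_gt0 => //; lra.
Qed.
End One.

Section Q.
Variable R : realType.
Local Notation mu := (@lebesgue_measure R).

Definition suppQ N (g : 'rV[R]_N -> R) := forall z : 'rV[R]_N, (exists i, 1 < `|z 0 i|) -> g z = 0.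
Definition Qf N (g : 'rV[R]_N -> R) := continuous g /\ suppQ g.
Definition sec N (g : 'rV[R]_N.+1 -> R) (t : R) : 'rV[R]_N -> R :=
  fun v => g (row_mx (const_mx t : 'rV[R]_1) v).

Lemma intRNS N (g : 'rV[R]_N.+1 -> R) :
  intRN g = Rintegral mu setT (fun t => intRN (sec g t)).
Proof. by []. Qed.

Lemma ed_cont (U : pseudoMetricNormedZmodType R) (f : U -> R) :
  (forall x e, 0 < e -> exists2 d, 0 < d & forall y, `|x - y| < d -> `|f x - f y| < e) ->
  continuous f.
Proof.
move=> H x; apply/cvgrPdist_lt => e e0.
have [d d0 Hd] := H x e e0.
apply/nbhs_ballP; exists d => // y.
by rewrite -ball_normE /=; exact: Hd.
Qed.

Lemma coord_diff N (z w : 'rV[R]_N) i : `|z 0 i - w 0 i| <= `|z - w|.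
Proof.
have := coord_le_normV (z - w) i; by rewrite !mxE.
Qed.

Lemma UC N (g : 'rV[R]_N -> R) : Qf g ->
  forall e, 0 < e -> exists2 d, 0 < d & forall z w, `|z - w| < d -> `|g z - g w| < e.
Proof.
move=> [cg sg] e e0.
have cK : compact [set v : 'rV[R]_N | forall i, `[(-2 : R), 2]%classic (v ord0 i)].
  by apply: (@rV_compact _ _ (fun=> `[(-2 : R), 2]%classic)) => _; exact: segment_compact.
have [d d0 Hd] := heine_cantor cK (continuous_subspaceT cg) e0.
exists (Num.min d 1); first by rewrite lt_min d0 ltr01.
move=> z w; rewrite lt_min => /andP[zwd zw1].
have out : forall a b : 'rV[R]_N, `|a - b| < 1 ->
    ~ (forall i, `[(-2 : R), 2]%classic (a ord0 i)) -> g a = 0 /\ g b = 0.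
  move=> a b ab Na.
  have [i Hi] : exists i, ~ `[(-2 : R), 2]%classic (a ord0 i).
    by apply: contrapT => H; apply: Na => i; apply: contrapT => Hi; apply: H; exists i.
  have ai : 2 < `|a 0 i|.
    rewrite ltNge; apply/negP => H; apply: Hi.
    by rewrite /= in_itv /= -ler_norml.
  have := coord_diff a b i; have := ler_distD (a 0 i) (b 0 i) 0.
  move=> h1 h2.
  split; apply: sg; exists i.
    by lra.
  have : `|a 0 i| <= `|a 0 i - b 0 i| + `|b 0 i|.
    by have := ler_normD (a 0 i - b 0 i) (b 0 i); rewrite subrK.
  lra.
have [Kz|Nz] := pselect (forall i, `[(-2 : R), 2]%classic (z ord0 i)).
  have [Kw|Nw] := pselect (forall i, `[(-2 : R), 2]%classic (w ord0 i)).
    exact: Hd.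
  have wz1 : `|w - z| < 1 by rewrite distrC.
  by have [-> ->] := out w z wz1 Nw; rewrite subrr normr0.
by have [-> ->] := out z w zw1 Nz; rewrite subrr normr0.
Qed.

Lemma rowc_l N (t : R) (v : 'rV[R]_N) : (row_mx (const_mx t : 'rV[R]_1) v) 0 (lshift N 0) = t.
Proof. by rewrite row_mxEl mxE. Qed.

Lemma rowc_r N (t : R) (v : 'rV[R]_N) i : (row_mx (const_mx t : 'rV[R]_1) v) 0 (rshift 1 i) = v 0 i.
Proof. by rewrite row_mxEr. Qed.

Lemma rowc_dist N (t t' : R) (v v' : 'rV[R]_N) :
  `|row_mx (const_mx t : 'rV[R]_1) v - row_mx (const_mx t' : 'rV[R]_1) v'| <= `|t - t'| + `|v - v'|.
Proof.
apply: normV_le; first by rewrite addr_ge0.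
rewrite opp_row_mx add_row_mx.
move=> j; rewrite -(@splitK 1 N j); case: (fintype.split j) => k /=.
- rewrite row_mxEl (ord1 k) !mxE lerDl; exact: normr_ge0.
- rewrite row_mxEr; apply: le_trans (coord_le_normV _ _) _; rewrite lerDr; exact: normr_ge0.
Qed.

Lemma Qsec N (g : 'rV[R]_N.+1 -> R) t : Qf g -> Qf (sec g t).
Proof.
move=> Qg; have [_ sg] := Qg; split.
  apply: ed_cont => x e e0.
  have [d d0 Hd] := UC Qg e0.
  exists d => // y xy; apply: Hd.
  apply: le_lt_trans (rowc_dist _ _ _ _) _; by rewrite subrr normr0 add0r.
move=> v [i Hi]; apply: sg; exists (rshift 1 i); by rewrite rowc_r.
Qed.

Lemma QD N (g h : 'rV[R]_N -> R) : Qf g -> Qf h -> Qf (fun z => g z + h z).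
Proof.
move=> [cg sg] [ch sh]; split.
  by move=> x; apply: continuousD; [exact: cg | exact: ch].
by move=> z Hz; rewrite sg // sh // addr0.
Qed.

Lemma QZ N c (g : 'rV[R]_N -> R) : Qf g -> Qf (fun z => c * g z).
Proof.
move=> [cg sg]; split.
  by move=> x; apply: continuousM; [exact: cst_continuous | exact: cg].
by move=> z Hz; rewrite sg // mulr0.
Qed.

Lemma Q0 N : Qf (fun _ : 'rV[R]_N => 0).
Proof. by split; [exact: cst_continuous | by []]. Qed.

Lemma intRN0 N : intRN (fun _ : 'rV[R]_N => 0) = 0.
Proof.
elim: N => [//|N IH]; rewrite intRNS /sec IH.
by rewrite Rintegral_cst // mul0r.
Qed.

Definition Pn N :=
  (forall g h : 'rV[R]_N -> R, Qf g -> Qf h -> intRN (fun z => g z + h z) = intRN g + intRN h) /\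
  (forall c (g : 'rV[R]_N -> R), Qf g -> intRN (fun z => c * g z) = c * intRN g) /\
  (forall g : 'rV[R]_N -> R, (forall z, 0 <= g z) -> 0 <= intRN g) /\
  (forall (g : 'rV[R]_N -> R) B, Qf g -> (forall z, `|g z| <= B) -> `|intRN g| <= 2 ^+ N * B) /\
  (forall (g : 'rV[R]_N -> R) z0, Qf g -> (forall z, 0 <= g z) -> 0 < g z0 -> 0 < intRN g).

Lemma Fprops N : Pn N -> forall g : 'rV[R]_N.+1 -> R, Qf g ->
  continuous (fun t => intRN (sec g t)) /\ supp1D (fun t => intRN (sec g t)).
Proof.
move=> [Hadd [Hsc [_ [Hb _]]]] g Qg; split.
- apply: ed_cont => t e e0.
  set P := 2 ^+ N : R.
  have P0 : 0 < P by rewrite exprn_gt0.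
  have e'0 : 0 < e / (2 * P) by rewrite divr_gt0 // mulr_gt0.
  have [d d0 Hd] := UC Qg e'0.
  exists d => // t' tt'.
  have -> : intRN (sec g t) - intRN (sec g t') =
      intRN (fun v => sec g t v + (-1) * sec g t' v).
    rewrite Hadd; [|exact: Qsec|exact: QZ (Qsec _ Qg)].
    by rewrite Hsc; [ring|exact: Qsec].
  apply: le_lt_trans (Hb _ (e / (2 * P)) _ _) _.
  - exact: QD (Qsec _ Qg) (QZ _ (Qsec _ Qg)).
  - move=> v; rewrite mulN1r; apply: ltW; apply: Hd.
    apply: le_lt_trans (rowc_dist _ _ _ _) _; by rewrite subrr normr0 addr0.
  - have -> : P * (e / (2 * P)) = e / 2 by field; apply/eqP; lra.
    lra.
- move=> t Ht.
  have -> : sec g t = fun _ => 0.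
    apply/funext => v; apply: Qg.2; exists (@lshift 1 N 0); by rewrite rowc_l.
  exact: intRN0.
Qed.

Lemma allP N : Pn N.
Proof.
elim: N => [|N IH].
  split; first by [].
  split; first by [].
  split; first by move=> g; apply.
  split; first by move=> g B _ H; rewrite expr0 mul1r; exact: H.
  move=> g z0 _ _; by rewrite (thinmx0 z0).
have [Hadd [Hsc [Hnn [Hb Hpos]]]] := IH.
have FP := Fprops IH.
split.
  move=> g h Qg Qh.
  have E : (fun t => intRN (sec (fun z => g z + h z) t)) =
      (fun t => intRN (sec g t) + intRN (sec h t)).
    by apply/funext => t; exact: Hadd (Qsec t Qg) (Qsec t Qh).
  have [cg sg] := FP _ Qg; have [ch sh] := FP _ Qh.
  by rewrite intRNS E RintegralD //; exact: int1_integrable.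
split.
  move=> c g Qg.
  have E : (fun t => intRN (sec (fun z => c * g z) t)) =
      (fun t => c * intRN (sec g t)).
    by apply/funext => t; exact: Hsc (Qsec t Qg).
  have [cg sg] := FP _ Qg.
  by rewrite intRNS E RintegralZl //; exact: int1_integrable.
split.
  by move=> g g0; rewrite intRNS; apply: Rintegral_ge0 => t _; apply: Hnn => v; exact: g0.
split.
  move=> g B Qg gB; have [cg sg] := FP _ Qg.
  rewrite intRNS exprS -mulrA; apply: int1_bound => // t.
  by apply: Hb; [exact: Qsec | move=> v; exact: gB].
move=> g z0 Qg g0 gz0; have [cg sg] := FP _ Qg.
rewrite intRNS; apply: (@int1_gt0 R _ (z0 0 (@lshift 1 N 0))) => //.
  by move=> t; apply: Hnn => v; exact: g0.
apply: (Hpos _ (rsubmx (z0 : 'M[R]_(1, 1 + N)))); [exact: Qsec | by move=> v; exact: g0 |].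
rewrite /sec; suff -> : row_mx (const_mx (z0 0 (@lshift 1 N 0)) : 'rV[R]_1) (rsubmx (z0 : 'M[R]_(1, 1 + N))) = z0 by [].
rewrite -[RHS](@hsubmxK _ 1 1 N); congr row_mx.
by apply/rowP => k; rewrite (ord1 k) !mxE.
Qed.
End Q.

Section M.
Variables (R : realType) (N : nat).
Notation V := 'rV[R]_N.

Lemma BO (Omega : set V) (eta : V -> R) : open Omega -> (forall x, 0 <= eta x) ->
  (forall x, eta x <> 0 -> forall p, bdry Omega p -> eta x < enorm (x - p)) ->
  forall x, Omega x -> forall c : V, enorm c <= 1 -> forall a, 0 <= a <= 1 ->
  Omega (x - (a * eta x) *: c).
Proof.
move=> hO e0 hd x Ox c c1 a /andP[a0 a1].
have iO : Omega° = Omega := (interior_id Omega).1 hO.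
set d := (a * eta x) *: c.
have nb : forall s, 0 <= s <= 1 -> ~ bdry Omega (x - s *: d).
  move=> s /andP[s0 s1] [cp bp].
  have [ex0|ex0] := eqVneq (eta x) 0.
    by apply: bp; rewrite iO /d ex0 mulr0 scale0r scaler0 subr0.
  have ex0' : eta x <> 0 by apply/eqP.
  have := hd x ex0' _ (conj cp bp).
  rewrite opprB addrC subrK /d !enormZ.
  have := enorm_ge0 c; have := e0 x.
  rewrite (ger0_norm s0) (ger0_norm (mulr_ge0 a0 (e0 x))).
  move=> h1 h2 h3.
  have : s * (a * eta x * enorm c) <= eta x.
    have h4 : a * eta x * enorm c <= eta x.
      have : a * eta x <= eta x by rewrite ler_piMl.
      move=> h5; apply: le_trans (_ : a * eta x * 1 <= _); last by rewrite mulr1.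
      by apply: ler_wpM2l => //; rewrite mulr_ge0.
    apply: le_trans h4; rewrite ler_piMl //.
    by rewrite !mulr_ge0.
  lra.
pose g := fun s : R => x - s *: d.
have cg : continuous g.
  move=> s; rewrite /g; apply: (@continuousB _ _ _ (fun=> x) (fun s : R => s *: d) s).
    exact: cst_continuous.
  apply: (@continuousZ _ _ _ id (fun=> d)).
    exact: cvg_id.
  exact: cst_continuous.
have E : `[0, 1]%classic `&` (g @^-1` Omega) = `[0, 1]%classic.
  apply: (@segment_connected R 0 1).
  - exists 0; split; first by rewrite /= in_itv /= lexx ler01.
  by rewrite /g /= scale0r subr0.
  - exists (g @^-1` Omega) => //; apply: open_comp => //; by move=> ? _; exact: cg.
  - exists (g @^-1` closure Omega).
      by apply: preimage_closed; [move=> ? _; exact: cg | exact: closed_closure].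
  apply/seteqP; split => s [s01 gs]; split => //.
    exact: subset_closure.
  apply: contrapT => Ngs; apply: (nb s); first by move: s01; rewrite /= in_itv.
  by split => //; rewrite iO.
have : (`[0, 1]%classic `&` (g @^-1` Omega)) 1.
    by rewrite E /= in_itv /= ler01 lexx.
  by move=> [_]; rewrite /g /= scale1r.
Qed.

Lemma within_ed_cont (K : set V) (g : V -> R) :
  (forall x, K x -> forall e, 0 < e -> exists2 d, 0 < d &
     forall y, K y -> `|x - y| < d -> `|g x - g y| < e) ->
  {within K, continuous g}.
Proof.
move=> H; apply/subspace_continuousP => x Kx.
apply/cvgrPdist_lt => e e0; have [d d0 Hd] := H x Kx e e0.
rewrite /within /=; apply/nbhs_ballP; exists d => // y.
by rewrite -ball_normE /= => xy Ky; exact: Hd.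
Qed.

Lemma comp_cont (K : set V) (f : V -> R) (phi : V -> V) :
  (forall e, 0 < e -> exists2 d, 0 < d &
     forall u w, K u -> K w -> `|u - w| < d -> `|f u - f w| < e) ->
  continuous phi -> (forall z, K (phi z)) -> continuous (fun z => f (phi z)).
Proof.
move=> uf cphi Kphi; apply: ed_cont => z e e0.
have [d d0 Hd] := uf e e0.
have : \forall w \near z, `|phi z - phi w| < d by exact: (cvgrPdist_lt _ _).1 (cphi z) d d0.
move=> /nbhs_ballP[r /= r0 Hr]; exists r => // w zw.
apply: Hd => //; apply: Hr; by rewrite -ball_normE.
Qed.

Definition cl (z : V) : V := (Num.max 1 (enorm z))^-1 *: z.

Lemma cl_le1 z : enorm (cl z) <= 1.
Proof.
rewrite /cl enormZ ger0_norm; last by rewrite invr_ge0 le_max ler01.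
have m0 : 0 < Num.max 1 (enorm z) by rewrite lt_max ltr01.
rewrite mulrC ler_pdivrMr // mul1r le_max lexx orbT //.
Qed.

Lemma cl_id z : enorm z < 1 -> cl z = z.
Proof. by move=> z1; rewrite /cl max_l ?ltW // invr1 scale1r. Qed.

Lemma cl_cont : continuous cl.
Proof.
move=> z; apply: (@continuousZ _ _ _ (fun z => (Num.max 1 (enorm z))^-1) id).
  apply: continuous_comp; last first.
    by apply: inv_continuous; rewrite gt_eqF // lt_max ltr01.
  apply: (@continuous_max _ _ (fun=> 1) (@enorm R N)); first exact: cst_continuous.
  exact: enorm_continuous.
exact: cvg_id.
Qed.

Lemma closure_compact (Omega : set V) : (exists M, forall x, Omega x -> enorm x <= M) ->
  compact (closure Omega).
Proof.
move=> [M HM]; apply: bounded_closed_compact; last exact: closed_closure.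
have sub : closure Omega `<=` [set z : V | `|z| <= M].
  have cl : closed [set z : V | `|z| <= M].
    apply: (@preimage_closed _ _ (fun z : V => `|z|) [set r | r <= M]).
      by move=> ? _; exact: norm_continuous.
    exact: closed_le.
  rewrite ((closure_id _).1 cl); apply: closureS => x Ox.
  exact: le_trans (normV_le_enorm x) (HM x Ox).
exists M; split; first exact: num_real.
move=> M' MM' x /sub /= xM; apply: le_trans xM _; exact: ltW.
Qed.
End M.

Lemma intRN_diff (R : realType) N (g h : 'rV[R]_N -> R) B : Qf g -> Qf h ->
  (forall z, `|g z - h z| <= B) -> `|intRN g - intRN h| <= 2 ^+ N * B.
Proof.
move=> Qg Qh H; have [Hadd [Hsc [_ [Hb _]]]] := allP R N.
have -> : intRN g - intRN h = intRN (fun z => g z + (-1) * h z).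
  by rewrite Hadd ?Hsc //; [ring | exact: QZ].
apply: Hb; first exact: QD Qg (QZ _ Qh).
by move=> z; rewrite mulN1r; exact: H.
Qed.

Lemma zmod_id (V : zmodType) (x y u v : V) : x - u - (y - v) = (x - y) - (u - v).
Proof. by rewrite !opprB addrACA [RHS]addrACA addrC [RHS]addrC [- y + - u]addrC. Qed.

Unset Implicit Arguments.
Theorem proposition2p3 (R : realType) (N : nat) (Omega : set 'rV[R]_N)
  (rho : 'rV[R]_N -> R) (Delta : set 'rV[R]_N) (eta : 'rV[R]_N -> R) :
  (0 < N)%N ->
  open Omega ->
  (exists M : R, forall x, Omega x -> enorm x <= M) ->
  (* assumptions on rho *)
  smooth rho ->
  (forall x, 0 <= rho x <= 1) ->
  (forall x, rho x = 0 <-> 1 <= enorm x) ->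
  (forall x y, enorm x = enorm y -> rho x = rho y) ->
  (forall x y, enorm y = 2^-1 -> enorm x < 2^-1 -> rho y <= rho x) ->
  (* assumptions on Delta and Theta *)
  Delta `<=` closure Omega ->
  closed (bdry Omega `|` Delta) ->
  (* assumptions on eta *)
  smooth eta ->
  (forall x, 0 <= eta x) ->
  (forall x, eta x = 0 <-> (bdry Omega `|` Delta) x) ->
  (forall (l : seq 'I_N) x, (bdry Omega `|` Delta) x -> ipartial l eta x = 0) ->
  (forall x, ~ (bdry Omega `|` Delta) x ->
     ((eta x)%:E < distE x (bdry Omega `|` Delta)%classic)%E) ->
  (forall f : 'rV[R]_N -> R, {within closure Omega, continuous f} ->
     (exists g : 'rV[R]_N -> R,
        {within closure Omega, continuous g} /\
        (forall x, Omega x -> g x = Top rho eta f x) /\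
        (forall x, (bdry Omega `|` Delta) x -> g x = f x)) /\
     (forall e : R, 0 < e -> exists n0 : nat, forall n : nat, (n0 <= n)%N ->
        forall x, Omega x -> `|Topn rho eta n f x - f x| < e))
  /\
  (forall (f : 'rV[R]_N -> R) (Gamma : set 'rV[R]_N),
     {within Omega, continuous f} ->
     closed Gamma -> Gamma `<=` bdry Omega ->
     supp Omega f `&` Gamma = set0 ->
     supp Omega (Top rho eta f) `&` Gamma = set0).
Proof.
move=> N0 hO hM srho rho01 rho0 _ _ DeltaS _ seta eta0 etaZ _ etadist.
have crho : continuous rho := (srho [::]).1.
have ceta : continuous eta := (seta [::]).1.
have iO : Omega° = Omega := (interior_id Omega).1 hO.
have hd : forall x, eta x <> 0 -> forall p, bdry Omega p -> eta x < enorm (x - p).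
  move=> x ex p bp.
  have nTh : ~ (bdry Omega `|` Delta) x by move/(etaZ x).2.
  have := etadist x nTh; rewrite /distE => h.
  rewrite -lte_fin; apply: lt_le_trans h _.
  by apply: ereal_inf_lbound; exists p => //; left.
have BOx := BO hO eta0 hd.
have rho_out : forall z, ~ (enorm z < 1) -> rho z = 0.
  by move=> z /negP; rewrite -leNgt => /(rho0 z).2.
have rhoQ : Qf rho.
  split => // z [i Hi]; apply: rho_out => h.
  by have := coord_le_enorm z i; lra.
have [Hadd [Hsc [Hnn [Hb Hpos]]]] := allP R N.
have Ir0 : 0 < intRN rho.
  apply: (Hpos _ 0) => //; first by move=> z; case/andP: (rho01 z).
  rewrite lt_neqAle; case/andP: (rho01 0) => -> _; rewrite andbT.
  apply/eqP => /esym /(rho0 0).1; rewrite enorm0; lra.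
have Mr : Mrho rho = (intRN rho)^-1.
  rewrite /Mrho; congr (intRN _)^-1; apply/funext => z.
  by case: ifPn => // /negP h; rewrite rho_out.
pose k (f : 'rV[R]_N -> R) x s := fun z => rho z * f (x - s *: cl z).
have kE : forall f x s, (fun z => if enorm z < 1 then rho z * f (x - s *: z) else 0) = k f x s.
  move=> f x s; apply/funext => z; rewrite /k; case: ifPn => [/cl_id -> //|/negP h].
  by rewrite rho_out // mul0r.
have TopE : forall f x, Top rho eta f x = (intRN rho)^-1 * intRN (k f x (eta x)).
  by move=> f x; rewrite /Top Mr kE.
have TopnE : forall f n x, Topn rho eta n f x = (intRN rho)^-1 * intRN (k f x (eta x / n%:R)).
  by move=> f n x; rewrite /Topn Mr kE.
have thb : forall x, bdry Omega x -> eta x = 0 by move=> x bx; apply/(etaZ x).2; left.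
have etale : forall x p, bdry Omega p -> eta x <= enorm (x - p).
  move=> x p bp; have [e0|e0] := eqVneq (eta x) 0; first by rewrite e0 enorm_ge0.
  by apply: ltW; apply: hd => //; apply/eqP.
split; last first.
  move=> f Gamma _ _ GB sfG; apply/seteqP; split => // p [sp Gp].
  have bp := GB p Gp.
  have nsf : ~ supp Omega f p by move=> h; have : (supp Omega f `&` Gamma) p by [] ; rewrite sfG.
  have : exists2 r, 0 < r & forall w, Omega w -> `|p - w| < r -> f w = 0.
    apply: contrapT => H; apply: nsf => B /nbhs_ballP [r r0 Hr].
    apply: contrapT => H2; apply: H; exists r => // w Ow pw.
    apply: contrapT => fw; apply: H2; exists w; split => //.
    by apply: Hr; rewrite -ball_normE.
  move=> [r r0 Hr].
  have N1 : 0 < N%:R + 1 :> R by rewrite addr_gt0 // ltr0n.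
  have r'0 : 0 < r / (N%:R + 1) by rewrite divr_gt0.
  have : exists x, (Omega x /\ Top rho eta f x <> 0) /\ ball p (r / (N%:R + 1)) x.
    by have [x []] := sp _ (nbhsx_ballx p _ r'0); exists x.
  move=> [x [[Ox Tx] px]]; apply: Tx.
  rewrite -ball_normE /= in px.
  rewrite /Top; have -> : (fun z => if enorm z < 1 then rho z * f (x - eta x *: z) else 0) = fun _ => 0.
    apply/funext => z; case: ifPn => // z1.
    have Ow : Omega (x - eta x *: z).
      have := BOx x Ox z (ltW z1) 1; rewrite mul1r; apply; by rewrite ler01 lexx.
    rewrite Hr ?mulr0 //.
    have e1 : eta x <= N%:R * (r / (N%:R + 1)).
      apply: le_trans (etale x p bp) _; apply: le_trans (enorm_le_normV _) _.
      by rewrite ler_wpM2l // distrC ltW.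
    have : `|eta x *: z| <= eta x.
      rewrite normrZ ger0_norm // ler_piMr //.
      exact: le_trans (normV_le_enorm z) (ltW z1).
    move=> h; rewrite opprD opprK addrA.
    apply: le_lt_trans (ler_normD _ _) _.
    have -> : r = r / (N%:R + 1) + N%:R * (r / (N%:R + 1)) by field; apply/eqP; lra.
    by apply: ltr_leD => //; exact: le_trans h e1.
  by rewrite intRN0 mulr0.
move=> f cf.
have cO := closure_compact hM.
have ufO := heine_cantor cO cf.
have Kphi : forall x, closure Omega x -> forall a, 0 <= a <= 1 -> forall z,
    closure Omega (x - (a * eta x) *: cl z).
  move=> x cx a a01 z; have [Ox|nOx] := pselect (Omega x).
    by apply: subset_closure; apply: BOx => //; exact: cl_le1.
  have bx : bdry Omega x by split => //; rewrite iO.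
  by rewrite thb // mulr0 scale0r subr0.
have kQ : forall x a, closure Omega x -> 0 <= a <= 1 -> Qf (k f x (a * eta x)).
  move=> x a cx a01; split.
    move=> z; apply: continuousM; first exact: crho.
    apply: (comp_cont ufO) => //; last exact: Kphi.
    move=> w; apply: (@continuousB _ _ _ (fun=> x) (fun w => (a * eta x) *: cl w) w).
      exact: cst_continuous.
    apply: (@continuousZ _ _ _ (fun=> a * eta x) (@cl R N)); first exact: cst_continuous.
    exact: cl_cont.
  move=> z [i Hi]; rewrite /k rho_out ?mul0r // => h.
  by have := coord_le_enorm z i; lra.
have C0 : 0 < (intRN rho)^-1 * 2 ^+ N by rewrite mulr_gt0 ?invr_gt0 // exprn_gt0.
set C := (intRN rho)^-1 * 2 ^+ N in C0.
have rho_le1 : forall z, `|rho z| <= 1.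
  by move=> z; case/andP: (rho01 z) => h1 h2; rewrite ger0_norm.
have kQ1 : forall x, closure Omega x -> Qf (k f x (eta x)).
  move=> x cx; have := kQ x 1 cx; rewrite mul1r; apply; by rewrite ler01 lexx.
split.
  exists (Top rho eta f); split; last split => //.
    apply: within_ed_cont => x cx e e0.
    have e'0 : 0 < e / (2 * C) by rewrite divr_gt0 // mulr_gt0.
    have [df df0 Hf] := ufO _ e'0.
    have df20 : 0 < df / 2 by rewrite divr_gt0.
    have : \forall y \near x, `|eta x - eta y| < df / 2.
      exact: (cvgrPdist_lt _ _).1 (ceta x) _ df20.
    move=> /nbhs_ballP[de /= de0 He].
    exists (Num.min (df / 2) de); first by rewrite lt_min df20 de0.
    move=> y cy; rewrite lt_min => /andP[xy1 xy2].
    have exy : `|eta x - eta y| < df / 2 by apply: He; rewrite -ball_normE.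
    rewrite !TopE -mulrBr normrM ger0_norm ?invr_ge0 ?ltW //.
    apply: (@le_lt_trans _ _ ((intRN rho)^-1 * (2 ^+ N * (e / (2 * C))))).
      apply: ler_wpM2l; first by rewrite invr_ge0 ltW.
      apply: intRN_diff; [exact: kQ1 | exact: kQ1 |] => z.
      rewrite /k -mulrBr normrM.
      apply: le_trans (_ : 1 * (e / (2 * C)) <= _); last by rewrite mul1r.
      apply: ler_pM; [exact: normr_ge0 | exact: normr_ge0 | exact: rho_le1 |].
      apply: ltW; apply: Hf.
      - by have := Kphi x cx 1 ltac:(by rewrite ler01 lexx) z; rewrite mul1r.
      - by have := Kphi y cy 1 ltac:(by rewrite ler01 lexx) z; rewrite mul1r.
      have -> : x - eta x *: cl z - (y - eta y *: cl z) = (x - y) - (eta x - eta y) *: cl z.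
        by rewrite zmod_id scalerBl.
      apply: le_lt_trans (ler_normB _ _) _.
      rewrite normrZ (splitr df); apply: ltr_leD; first by apply: lt_le_trans xy1 _.
      apply: le_trans (_ : `|eta x - eta y| * 1 <= _); last by rewrite mulr1 ltW.
      apply: ler_wpM2l => //; apply: le_trans (normV_le_enorm _) _; exact: cl_le1.
    have -> : (intRN rho)^-1 * (2 ^+ N * (e / (2 * C))) = e / 2.
      by rewrite /C; field; rewrite gt_eqF // gt_eqF // exprn_gt0.
    lra.
  move=> x Thx; have ex := (etaZ x).2 Thx.
  rewrite TopE ex.
  have -> : k f x 0 = fun z => f x * rho z.
    by apply/funext => z; rewrite /k scale0r subr0 mulrC.
  by rewrite Hsc // mulrC mulfK // gt_eqF.
move=> e e0.
have e'0 : 0 < e / (2 * C) by rewrite divr_gt0 // mulr_gt0.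
have [df df0 Hf] := ufO _ e'0.
have cI := continuous_compact (continuous_subspaceT ceta) cO.
have [E0 [_ HE]] := compact_bounded cI.
set E := `|E0| + 1.
have EE : forall x, closure Omega x -> eta x <= E.
  move=> x cx.
  have : `|eta x| <= E.
    apply: (HE E); last by exists x.
    by rewrite /E; apply: le_lt_trans (ler_norm E0) _; rewrite ltrDl.
  by move=> h; apply: le_trans (ler_norm _) h.
have E0' : 0 <= E / df.
  by apply: divr_ge0; [rewrite /E; apply: addr_ge0 => //; exact: normr_ge0 | exact: ltW].
exists (Num.Def.archi_bound (E / df)).+1 => n nn0 x Ox.
have nR1 : 1 <= (n%:R : R) by rewrite ler1n; apply: leq_trans nn0.
have nR : 0 < (n%:R : R) by lra.
have En : E / df < n%:R.
  apply: lt_le_trans (archi_boundP E0') _; rewrite ler_nat; exact: ltnW.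
have cx : closure Omega x by exact: subset_closure.
have sa : eta x / n%:R = n%:R^-1 * eta x by rewrite mulrC.
have a01 : 0 <= (n%:R : R)^-1 <= 1 by rewrite invr_ge0 ltW //= invf_le1.
have kQn : Qf (k f x (eta x / n%:R)) by rewrite sa; exact: kQ.
rewrite TopnE.
have -> : f x = (intRN rho)^-1 * intRN (fun z => f x * rho z).
  by rewrite Hsc // mulrCA mulVf ?mulr1 // gt_eqF.
rewrite -mulrBr normrM ger0_norm ?invr_ge0 ?(ltW Ir0) //.
apply: (@le_lt_trans _ _ ((intRN rho)^-1 * (2 ^+ N * (e / (2 * C))))).
  apply: ler_wpM2l; first by rewrite invr_ge0 ltW.
  apply: intRN_diff => //; first exact: QZ.
  move=> z; rewrite /k [f x * _]mulrC -mulrBr normrM.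
  apply: le_trans (_ : 1 * (e / (2 * C)) <= _); last by rewrite mul1r.
  apply: ler_pM; [exact: normr_ge0 | exact: normr_ge0 | exact: rho_le1 |].
  apply: ltW; apply: Hf => //.
    by rewrite sa; exact: Kphi.
  rewrite addrAC subrr add0r normrN normrZ.
  have hs : 0 <= eta x / n%:R by rewrite divr_ge0 // ltW.
  rewrite (ger0_norm hs).
  apply: (@le_lt_trans _ _ (eta x / n%:R * 1)).
    apply: ler_wpM2l => //; apply: le_trans (normV_le_enorm _) _; exact: cl_le1.
  rewrite mulr1; apply: (@le_lt_trans _ _ (E / n%:R)).
    by apply: ler_wpM2r; [rewrite invr_ge0 ltW | exact: EE].
  by rewrite ltr_pdivrMr // mulrC -ltr_pdivrMr.
have -> : (intRN rho)^-1 * (2 ^+ N * (e / (2 * C))) = e / 2.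
  by rewrite /C; field; rewrite gt_eqF // gt_eqF // exprn_gt0.
lra.
Qed.
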